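(* Let $n\geqslant2$ and $r_1, \ldots , r_n$ be positive integers with $r_1<r_2<\cdots<r_n$. Then $$\varphi\big(C(r_1, \ldots, r_n)\big)=\varphi^{r_n-r_{n-1}}\big(C(r_1, \ldots, r_{n-1})\big)\varphi\big(C(r_1, \ldots, r_{n-2})\big)\frac{x^2-r_n}{x^2-r_{n-1}}.$$
   Context: For a graph $G$, $\varphi(G;x)$ (abbreviated $\varphi(G)$) denotes the characteristic polynomial of its adjacency matrix. For rooted trees $T_1,T_2$ with disjoint vertex sets and a positive integer $n$, $T_1\sim nT_2$ denotes the rooted tree obtained from $T_1$ and $n$ copies of $T_2$ by joining the root of $T_1$ to the roots of the copies of $T_2$; the root of $T_1$ is the root of the result. For positive integers $r_1<\cdots<r_n$, the rooted tree $C(r_1,\ldots,r_n)$ is defined recursively by $C(r_1,\ldots,r_n)=C(r_1,\ldots,r_{n-2})\sim (r_n-r_{n-1})C(r_1,\ldots,r_{n-1})$ for $n\geqslant2$, where $C(\,)$ is the one-vertex tree and $C(r_1)$ is the star on $r_1+1$ vertices rooted at its center. *)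

(* Defs.v *)
From mathcomp Require Import all_boot all_algebra.
Set Implicit Arguments. Unset Strict Implicit. Unset Printing Implicit Defensive.
Import GRing.Theory.
Local Open Scope ring_scope.

Inductive tree := Node of seq tree.

Definition leaf : tree := Node [::].

Fixpoint tree_size (t : tree) : nat :=
  let: Node ts := t in (sumn (map tree_size ts)).+1.

(* Vertices of t are numbered 0 .. tree_size t - 1 in preorder: the root is 0,
   and the k-th child subtree occupies a contiguous block starting right after
   the blocks of the previous children.  adj t i j : i and j are adjacent. *)
Fixpoint adj (t : tree) (i j : nat) {struct t} : bool :=
  let: Node ts := t in
  (fix go (l : seq tree) (o : nat) : bool :=
     match l with
     | [::] => false
     | c :: l' =>
       [|| (i == 0)%N && (j == o), (j == 0)%N && (i == o),
           [&& (o <= i)%N, (o <= j)%N, (i < o + tree_size c)%N,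
               (j < o + tree_size c)%N & adj c (i - o)%N (j - o)%N]
         | go l' (o + tree_size c)%N]
     end) ts 1%N.

Definition adjmx (t : tree) : 'M[int]_(tree_size t) :=
  \matrix_(i, j) (adj t i j)%:R.

Definition phi (t : tree) : {poly int} := char_poly (adjmx t).

(* T1 ~ k T2 : join the root of T1 to the roots of k copies of T2. *)
Definition tjoin (t1 : tree) (k : nat) (t2 : tree) : tree :=
  let: Node ts := t1 in Node (ts ++ nseq k t2).

(* Crev [:: r_m; r_(m-1); ...; r_1] = C(r_1, ..., r_m). *)
Fixpoint Crev (l : seq nat) : tree :=
  match l with
  | [::] => leaf
  | [:: r] => tjoin leaf r leaf
  | a :: ((b :: t) as l') => tjoin (Crev t) (a - b)%N (Crev l')
  end.

Definition C (s : seq nat) : tree := Crev (rev s).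

(* Main.v *)
Require Import Defs.
From mathcomp Require Import all_boot all_algebra.
From mathcomp Require Import fingroup perm zify ring.
Import GRing.Theory.
Local Open Scope ring_scope.
Set Implicit Arguments. Unset Strict Implicit. Unset Printing Implicit Defensive.

Section Bridge.
Variable R : comNzRingType.

Lemma ml N (A B C : 'M[R]_N) i0 :
  (forall j, A i0 j = B i0 j + C i0 j) ->
  (forall i j, i != i0 -> B i j = A i j) ->
  (forall i j, i != i0 -> C i j = A i j) -> \det A = \det B + \det C.
Proof.
move=> H1 H2 H3; rewrite -[\det B]mul1r -[\det C]mul1r.
apply: (@determinant_multilinear _ _ A B C i0).
- by apply/matrixP=> i j; rewrite !mxE !mul1r H1.
- by apply/matrixP=> i j; rewrite !mxE H2 // eq_sym neq_lift.
- by apply/matrixP=> i j; rewrite !mxE H3 // eq_sym neq_lift.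
Qed.

Lemma det_zrow N (A : 'M[R]_N) i0 : (forall j, A i0 j = 0) -> \det A = 0.
Proof.
move=> H; rewrite (@determinant_multilinear _ _ A A A i0 0 0) ?mul0r ?addr0 //.
by apply/matrixP=> i j; rewrite !mxE H !mul0r addr0.
Qed.

Variables m n : nat.
Variables (P : 'M[R]_(1 + m)) (Q : 'M[R]_(1 + n)).

Definition zr k (A : 'M[R]_(1 + k)) : 'M[R]_(1 + k) :=
  \matrix_(i, j) if i == 0 then 0 else A i j.
Definition er k (A : 'M[R]_(1 + k)) : 'M[R]_(1 + k) :=
  \matrix_(i, j) if i == 0 then - ((j == 0)%:R) else A i j.

Lemma det_er k (A : 'M[R]_(1 + k)) : \det (er A) = - \det (drsubmx A).
Proof.
have -> : er A = block_mx (-1) 0 (dlsubmx A) (drsubmx A).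
  apply/matrixP=> i j; rewrite -(splitK i) -(splitK j).
  case: (split i) => i'; case: (split j) => j' /=;
  rewrite ?block_mxEul ?block_mxEur ?block_mxEdl ?block_mxEdr !mxE /=.
  - by rewrite !ord1 /= mulr1n.
  - by rewrite ord1 /= oppr0.
  - by [].
  - by [].
by rewrite det_lblock det_mx11 !mxE /= mulNr mul1r.
Qed.


Ltac blk i j := rewrite -(splitK i) -(splitK j); case: (split i) => a; case: (split j) => b /=;
  rewrite ?block_mxEul ?block_mxEur ?block_mxEdl ?block_mxEdr ?mxE ?eq_lshift ?eq_rshift ?eq_lrshift ?eq_rlshift.

Ltac cl := try done; try (let H := fresh in move=> H; rewrite (negPf H) /=); rewrite ?mulr0n ?oppr0 ?eqxx.

Lemma bridge :
  \det (block_mx P (- delta_mx 0 0) (- delta_mx 0 0) Q) =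
  \det P * \det Q - \det (drsubmx P) * \det (drsubmx Q).
Proof.
set E := (delta_mx 0 0 : 'M[R]_(1 + m, 1 + n)).
set E' := (delta_mx 0 0 : 'M[R]_(1 + n, 1 + m)).
pose i0 : 'I_((1 + m) + (1 + n)) := lshift _ 0.
pose i1 : 'I_((1 + m) + (1 + n)) := rshift _ 0.
rewrite (@ml _ _ (block_mx P 0 (- E') Q) (block_mx (zr P) (- E) (- E') Q) i0); first last.
- move=> i j; blk i j; by cl.
- move=> i j; blk i j; by cl.
- move=> j; rewrite /i0 -(splitK j); case: (split j) => ? /=;
  by rewrite ?block_mxEul ?block_mxEur ?block_mxEdl ?block_mxEdr ?mxE ?eqxx ?addr0 ?add0r.
rewrite det_lblock.
rewrite (@ml _ _ (block_mx (zr P) (- E) (- E') (zr Q)) (block_mx (zr P) (- E) 0 Q) i1); first last.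
- move=> i j; blk i j; by cl.
- move=> i j; blk i j; by cl.
- move=> j; rewrite /i1 -(splitK j); case: (split j) => ? /=;
  by rewrite ?block_mxEul ?block_mxEur ?block_mxEdl ?block_mxEdr ?mxE ?eqxx ?addr0 ?add0r.
rewrite [X in _ + (_ + X)]det_ublock (@det_zrow _ (zr P) 0) ?mul0r ?addr0; last first.
  by move=> j; rewrite mxE eqxx.
have -> : block_mx (zr P) (- E) (- E') (zr Q) = xrow i0 i1 (block_mx (er P) 0 0 (er Q)).
  apply/matrixP => i j; rewrite [RHS]mxE.
  case: tpermP => [->|->|].
  - rewrite /i0 /i1 -(splitK j); case: (split j) => ? /=;
    rewrite ?block_mxEul ?block_mxEur ?block_mxEdl ?block_mxEdr ?mxE ?eqxx /=; cl.
  - rewrite /i0 /i1 -(splitK j); case: (split j) => ? /=;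
    rewrite ?block_mxEul ?block_mxEur ?block_mxEdl ?block_mxEdr ?mxE ?eqxx /=; cl.
  - rewrite /i0 /i1; blk i j => Ha Hb.
    + have /negPf -> : a != 0 by apply/eqP => Ea; apply: Ha; rewrite Ea.
      by rewrite /= ?mulr0n ?oppr0.
    + have /negPf -> : a != 0 by apply/eqP => Ea; apply: Ha; rewrite Ea.
      by rewrite /= ?mulr0n ?oppr0.
    + have /negPf -> : a != 0 by apply/eqP => Ea; apply: Hb; rewrite Ea.
      by rewrite /= ?mulr0n ?oppr0.
    + have /negPf -> : a != 0 by apply/eqP => Ea; apply: Hb; rewrite Ea.
      by rewrite /= ?mulr0n ?oppr0.
rewrite xrowE det_mulmx det_perm odd_tperm det_ublock !det_er.
by rewrite /i0 /i1 eq_lrshift /= expr1 mulrNN mulN1r.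
Qed.
End Bridge.


Unset Implicit Arguments.

Fixpoint goF (i j : nat) (l : seq tree) (o : nat) : bool :=
  match l with
  | [::] => false
  | c :: l' =>
    [|| (i == 0)%N && (j == o), (j == 0)%N && (i == o),
        [&& (o <= i)%N, (o <= j)%N, (i < o + tree_size c)%N,
            (j < o + tree_size c)%N & adj c (i - o)%N (j - o)%N]
      | goF i j l' (o + tree_size c)%N]
  end.

Lemma adjE ts i j : adj (Node ts) i j = goF i j ts 1.
Proof. by rewrite /=; elim: ts 1%N => //= c l IH o; rewrite IH. Qed.

Definition clause (c : tree) (i j o : nat) : bool :=
    [|| (i == 0)%N && (j == o), (j == 0)%N && (i == o) |
        [&& (o <= i)%N, (o <= j)%N, (i < o + tree_size c)%N,
            (j < o + tree_size c)%N & adj c (i - o)%N (j - o)%N]].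

Lemma goF_rcons i j l c o :
  goF i j (rcons l c) o = goF i j l o || clause c i j (o + sumn (map tree_size l)).
Proof.
elim: l o => [|c' l IH] o /=; first by rewrite addn0 orbF /clause orbA.
by rewrite IH addnA !orbA.
Qed.

Lemma tree_size_gt0 t : (0 < tree_size t)%N.
Proof. by case: t. Qed.

Lemma goF_bound i j l o : (0 < o)%N -> goF i j l o ->
  (i < o + sumn (map tree_size l))%N && (j < o + sumn (map tree_size l))%N.
Proof.
elim: l o => [|c l IH] o //= o0.
have c0 := tree_size_gt0 c.
case/or4P => [/andP [/eqP -> /eqP ->]|/andP [/eqP -> /eqP ->]|/and5P [_ _ h1 h2 _]|H]; try lia.
by move: (IH _ (ltn_addr _ o0) H); rewrite !addnA.
Qed.

Lemma tsize_rcons ts c :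
  tree_size (Node (rcons ts c)) = (tree_size (Node ts) + tree_size c)%N.
Proof. by rewrite /= map_rcons -cats1 sumn_cat /= addn0 addSn. Qed.

Lemma adj_rcons ts c i j :
  adj (Node (rcons ts c)) i j = adj (Node ts) i j || clause c i j (tree_size (Node ts)).
Proof. by rewrite !adjE goF_rcons add1n. Qed.

Lemma adj_bound ts i j : adj (Node ts) i j ->
  (i < tree_size (Node ts))%N && (j < tree_size (Node ts))%N.
Proof. by rewrite adjE => /goF_bound; rewrite add1n; apply. Qed.

Lemma adjR_ll ts c i j : (i < tree_size (Node ts))%N -> (j < tree_size (Node ts))%N ->
  adj (Node (rcons ts c)) i j = adj (Node ts) i j.
Proof.
move=> hi hj; rewrite adj_rcons /clause.
case: (adj _ _ _) => //=; apply/negP; case/or3P.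
- by case/andP=> _ /eqP E; rewrite E ltnn in hj.
- by case/andP=> _ /eqP E; rewrite E ltnn in hi.
- by case/and5P=> h _ _ _ _; rewrite leqNgt hi in h.
Qed.

Lemma adjN ts i j : ~~ ((i < tree_size (Node ts))%N && (j < tree_size (Node ts))%N) ->
  adj (Node ts) i j = false.
Proof. by move=> H; apply/negP => /adj_bound; apply/negP. Qed.

Lemma adjR_rr ts c i j : (tree_size (Node ts) <= i)%N -> (tree_size (Node ts) <= j)%N ->
  (i < tree_size (Node ts) + tree_size c)%N -> (j < tree_size (Node ts) + tree_size c)%N ->
  adj (Node (rcons ts c)) i j = adj c (i - tree_size (Node ts)) (j - tree_size (Node ts)).
Proof.
move=> h1 h2 h3 h4; rewrite adj_rcons adjN; last by rewrite negb_and -!leqNgt h1.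
rewrite /clause h1 h2 h3 h4 /=.
have -> : (i == 0)%N = false by apply/negP => /eqP E; rewrite E in h1.
by have -> : (j == 0)%N = false by apply/negP => /eqP E; rewrite E in h2.
Qed.

Lemma adjR_lr ts c i j : (i < tree_size (Node ts))%N -> (tree_size (Node ts) <= j)%N ->
  adj (Node (rcons ts c)) i j = (i == 0)%N && (j == tree_size (Node ts)).
Proof.
move=> h1 h2; rewrite adj_rcons adjN; last by rewrite negb_and -!leqNgt h2 orbT.
rewrite /clause [(_ <= i)%N]leqNgt h1 /= orbF.
have -> : (j == 0)%N = false by apply/negP => /eqP E; rewrite E in h2.
by rewrite orbF.
Qed.

Lemma adjR_rl ts c i j : (tree_size (Node ts) <= i)%N -> (j < tree_size (Node ts))%N ->
  adj (Node (rcons ts c)) i j = (j == 0)%N && (i == tree_size (Node ts)).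
Proof.
move=> h1 h2; rewrite adj_rcons adjN; last by rewrite negb_and -!leqNgt h1.
rewrite /clause [(_ <= j)%N]leqNgt h2 /= andbF orbF.
have -> : (i == 0)%N = false by apply/negP => /eqP E; rewrite E in h1.
by [].
Qed.

Definition F (t : tree) (i j : nat) : {poly int} :=
  'X *+ (i == j)%N - ((adj t i j)%:R : int)%:P.
Definition mxf N (f : nat -> nat -> {poly int}) : 'M[{poly int}]_N :=
  \matrix_(i < N, j < N) f i j.
Definition psi (t : tree) : {poly int} :=
  \det (mxf (tree_size t).-1 (fun i j => F t i.+1 j.+1)).

Lemma phiE t : phi t = \det (mxf (tree_size t) (F t)).
Proof.
rewrite /phi /char_poly /char_poly_mx; congr (\det _).
by apply/matrixP => i j; rewrite !mxE.
Qed.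

Lemma phi_leaf : phi leaf = 'X.
Proof. by rewrite phiE det_mx11 mxE /F /= subr0. Qed.

Lemma psi_nil : psi (Node [::]) = 1.
Proof. by rewrite /psi det_mx00. Qed.

Lemma ord_eq0 k (a : 'I_k.+1) : (a == 0) = (val a == 0%N).
Proof. by []. Qed.

Lemma cross_poly (b1 b2 : bool) : b1 = b2 ->
  'X *+ false - ((b1%:R : int))%:P = 1 *- b2 :> {poly int}.
Proof. by move=> ->; case: b2; rewrite /= ?polyC1 ?polyC0 sub0r ?oppr0. Qed.

Lemma drsub_mxf k f : drsubmx (mxf (1 + k) f) = mxf k (fun i j => f i.+1 j.+1).
Proof. by apply/matrixP => i j; rewrite !mxE. Qed.

Lemma phi_rcons ts c :
  phi (Node (rcons ts c)) = phi (Node ts) * phi c - psi (Node ts) * psi c.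
Proof.
case: c => us.
rewrite !phiE /psi tsize_rcons.
set m := sumn (map tree_size ts).
set n := sumn (map tree_size us).
have -> : mxf (tree_size (Node ts) + tree_size (Node us)) (F (Node (rcons ts (Node us))))
   = block_mx (mxf (1 + m) (F (Node ts))) (- delta_mx 0 0) (- delta_mx 0 0)
              (mxf (1 + n) (F (Node us))).
  apply/matrixP => i j; rewrite -(splitK i) -(splitK j).
  case: (split i) => a; case: (split j) => b /=;
  rewrite ?block_mxEul ?block_mxEur ?block_mxEdl ?block_mxEdr ?mxE /=.
  - by rewrite /F adjR_ll.
  - rewrite /F adjR_lr //; last by rewrite leq_addr.
    have -> : ((a : nat) == (sumn [seq tree_size i | i <- ts]).+1 + b)%N = false.
      have Ha : (a < (sumn [seq tree_size i | i <- ts]).+1)%N := ltn_ord a.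
      by apply/negP => /eqP; lia.
    apply: cross_poly; rewrite !ord_eq0; congr (_ && _).
    by rewrite -[X in _ == X]addn0 eqn_add2l.
  - rewrite /F adjR_rl //; last by rewrite leq_addr.
    have -> : ((sumn [seq tree_size i | i <- ts]).+1 + a == (b : nat))%N = false.
      have Ha : (b < (sumn [seq tree_size i | i <- ts]).+1)%N := ltn_ord b.
      by apply/negP => /eqP; lia.
    apply: cross_poly; rewrite !ord_eq0 andbC; congr (_ && _).
    by rewrite -[X in _ == X]addn0 eqn_add2l.
  - rewrite /F adjR_rr ?leq_addr ?ltn_add2l ?ltn_ord // !addKn eqn_add2l //.
rewrite bridge !drsub_mxf //.
Qed.

Lemma FR_ll ts c i j : (i < tree_size (Node ts))%N -> (j < tree_size (Node ts))%N ->
  F (Node (rcons ts c)) i j = F (Node ts) i j.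
Proof. by move=> h1 h2; rewrite /F adjR_ll. Qed.

Lemma FR_lr ts c i j : (i.+1 < tree_size (Node ts))%N -> (tree_size (Node ts) <= j)%N ->
  F (Node (rcons ts c)) i.+1 j = 0.
Proof.
move=> h1 h2; rewrite /F adjR_lr //.
have -> : (i.+1 == j) = false by apply/negP => /eqP E; rewrite -E in h2; rewrite ltnNge h2 in h1.
by rewrite /= mulr0n polyC0 subr0.
Qed.

Lemma FR_rl ts c i j : (tree_size (Node ts) <= i)%N -> (j.+1 < tree_size (Node ts))%N ->
  F (Node (rcons ts c)) i j.+1 = 0.
Proof.
move=> h1 h2; rewrite /F adjR_rl //.
have -> : (i == j.+1) = false by apply/negP => /eqP E; rewrite E in h1; rewrite ltnNge h1 in h2.
by rewrite /= mulr0n polyC0 subr0.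
Qed.

Lemma FR_rr ts c i j : (i < tree_size c)%N -> (j < tree_size c)%N ->
  F (Node (rcons ts c)) (tree_size (Node ts) + i) (tree_size (Node ts) + j) = F c i j.
Proof.
move=> h1 h2; rewrite /F adjR_rr ?leq_addr ?ltn_add2l // !addKn.
by rewrite eqn_add2l.
Qed.

Lemma psi_rcons ts c : psi (Node (rcons ts c)) = psi (Node ts) * phi c.
Proof.
case: c => us.
rewrite /psi phiE tsize_rcons.
set m := sumn (map tree_size ts).
set n := sumn (map tree_size us).
have -> : mxf (tree_size (Node ts) + tree_size (Node us)).-1
    (fun i j => F (Node (rcons ts (Node us))) i.+1 j.+1)
   = block_mx (mxf m (fun i j => F (Node ts) i.+1 j.+1)) 0 0
              (mxf (1 + n) (F (Node us))).
  apply/matrixP => i j; rewrite -(splitK i) -(splitK j).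
  case: (split i) => a; case: (split j) => b /=;
  rewrite ?block_mxEul ?block_mxEur ?block_mxEdl ?block_mxEdr ?mxE /= -/m -/n.
  - by rewrite FR_ll //= ltnS ltn_ord.
  - by rewrite FR_lr //= ?ltnS ?ltn_ord // leq_addr.
  - by rewrite FR_rl //= ?ltnS ?ltn_ord // leq_addr.
  - exact: (@FR_rr ts (Node us) a b (ltn_ord a) (ltn_ord b)).
by rewrite det_ublock.
Qed.

Lemma nseqS_rcons k (x : tree) : nseq k.+1 x = rcons (nseq k x) x.
Proof. by elim: k => //= k ->. Qed.

Lemma tjoin_SE t1 k t2 : exists ts,
  tjoin t1 k t2 = Node ts /\ tjoin t1 k.+1 t2 = Node (rcons ts t2).
Proof.
case: t1 => ts; exists (ts ++ nseq k t2); split => //.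
by rewrite /tjoin nseqS_rcons rcons_cat.
Qed.

Lemma tjoin0 t1 t2 : tjoin t1 0 t2 = t1.
Proof. by case: t1 => ts; rewrite /= cats0. Qed.

Lemma psi_tjoin t1 k t2 : psi (tjoin t1 k t2) = psi t1 * phi t2 ^+ k.
Proof.
elim: k => [|k IH]; first by rewrite tjoin0 expr0 mulr1.
have [ts [E1 E2]] := tjoin_SE t1 k t2.
by rewrite E2 psi_rcons -E1 IH exprS; ring.
Qed.

Lemma phi_tjoin t1 k t2 : phi (tjoin t1 k t2) =
  phi t1 * phi t2 ^+ k - k%:R * psi t1 * psi t2 * phi t2 ^+ k.-1.
Proof.
elim: k => [|k IH]; first by rewrite tjoin0 expr0 mulr1; ring.
have [ts [E1 E2]] := tjoin_SE t1 k t2.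
rewrite E2 phi_rcons -E1 IH psi_tjoin.
case: k {IH E1 E2} => [|k] /=; rewrite ?exprS /=; ring.
Qed.

Definition qq (b : nat) : {poly int} := 'X^2 - ((b%:R : int))%:P.

Lemma qq_neq0 b : qq b != 0.
Proof. exact: monic_neq0 (monicXnsubC _ _). Qed.

Lemma qqE b : qq b = 'X^2 - b%:R.
Proof. by rewrite /qq polyC_natr. Qed.

Definition AA l := phi (Crev l).
Definition BB l := psi (Crev l).

Lemma psi_leaf : psi leaf = 1.
Proof. exact: psi_nil. Qed.

Lemma main_step a b t : (b < a)%N ->
  AA (b :: t) * AA t = BB (b :: t) * BB t * qq b ->
  AA [:: a, b & t] * qq b = AA (b :: t) ^+ (a - b) * AA t * qq a.
Proof.
move=> ba e.
rewrite /AA /BB [Crev [:: a, b & t]]/= phi_tjoin in e *.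
have [k Hk] : exists k, (a - b)%N = k.+1 by exists (a - b).-1; rewrite prednK // subn_gt0.
have Ha : a = (b + k.+1)%N by rewrite -Hk subnKC // ltnW.
rewrite Hk /= !qqE Ha natrD in e *.
apply/eqP; rewrite -subr_eq0.
set P1 := phi (Crev t); set P2 := phi (Crev (b :: t)).
set Q1 := psi (Crev t); set Q2 := psi (Crev (b :: t)).
rewrite -/P1 -/P2 -/Q1 -/Q2 in e.
have -> : (P1 * P2 ^+ k.+1 - k.+1%:R * Q1 * Q2 * P2 ^+ k) * ('X^2 - b%:R) -
  P2 ^+ k.+1 * P1 * ('X^2 - (b%:R + k.+1%:R)) =
  k.+1%:R * P2 ^+ k * (P2 * P1 - Q2 * Q1 * ('X^2 - b%:R)) by rewrite exprS; ring.
by rewrite e subrr mulr0.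
Qed.

Lemma inv_all b t : sorted gtn (b :: t) ->
  AA (b :: t) * AA t = BB (b :: t) * BB t * qq b.
Proof.
elim: t b => [|c t IH] b /=.
  move=> _; rewrite /AA /BB.
  have -> : Crev [:: b] = tjoin leaf b leaf by [].
  have -> : Crev [::] = leaf by [].
  rewrite phi_tjoin psi_tjoin phi_leaf psi_leaf qqE.
  by case: b => [|b] /=; rewrite ?exprS; ring.
case/andP => cb Hs.
have ec := IH c Hs.
have M := @main_step b c t cb ec.
apply: (mulIf (qq_neq0 c)).
set l := [:: b, c & t].
have eB : BB l = BB t * AA (c :: t) ^+ (b - c) by rewrite /BB /l psi_tjoin.
rewrite eB.
rewrite (_ : AA l * AA (c :: t) * qq c = AA (c :: t) * (AA l * qq c)); last by ring.
rewrite M.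
rewrite (_ : BB t * AA (c :: t) ^+ (b - c) * BB (c :: t) * qq b * qq c
  = AA (c :: t) ^+ (b - c) * qq b * (BB (c :: t) * BB t * qq c)); last by ring.
rewrite -ec; ring.
Qed.

Theorem lemma2 (n : nat) (r : seq nat) :
  (2 <= n)%N -> size r = n -> all (fun k => 0 < k)%N r -> sorted ltn r ->
  phi (C r) * ('X^2 - ((nth 0 r (n - 2))%:R)%:P) =
  phi (C (take n.-1 r)) ^+ (nth 0 r n.-1 - nth 0 r (n - 2))
    * phi (C (take (n - 2) r)) * ('X^2 - ((nth 0 r n.-1)%:R)%:P).
Proof.
move=> n2 sz _ so.
have sr : sorted gtn (rev r) by rewrite rev_sorted.
have : size (rev r) = n by rewrite size_rev.
rewrite -[r]revK in sz so * .
case: (rev r) sr => [|a [|b t]] sr /= Hn; first by rewrite -Hn in n2.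
  by rewrite -Hn in n2.
rewrite -Hn /= !rev_cons size_rev !size_rcons size_rev /=.
rewrite subn2 /=.
have h1 : take (size (rev t)).+1 (rcons (rcons (rev t) b) a) = rcons (rev t) b.
  by rewrite -[rcons (rcons _ b) a]cats1 take_size_cat // size_rcons.
have h2 : take (size (rev t)) (rcons (rcons (rev t) b) a) = rev t.
  by rewrite -!cats1 -catA take_size_cat.
rewrite size_rev in h1 h2; rewrite h1 h2.
rewrite !nth_rcons !size_rcons size_rev ltnn eqxx ltnSn ltnn eqxx.
rewrite /C !rev_rcons revK.
move: sr => /= /andP [ba srt].
have := @main_step a b t ba (@inv_all b t srt).
by rewrite /AA /qq.
Qed.
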